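(* With notation as below, the chain map $\Phi:\mathbb{G}\to\mathbb{F}$ is not a morphism of dg algebras, but for all $g_1,g_2\in\mathbb{G}$ one has $z\,\Phi(g_1g_2)=\Phi(g_1)\Phi(g_2)$, where products are taken with respect to Gemeda's dg algebra structures on the Taylor resolutions $\mathbb{G}$ and $\mathbb{F}$.
   Context: Let $n\ge1$, $a_1,\ldots,a_n\ge0$, $Q=\Bbbk[z,x_1,\ldots,x_n,y_{i,j}\ (1\le i\le n,1\le j\le a_i)]$, $I=(zx_1,\ldots,zx_n)$, $J=(x_iy_{i,j})$. Order $G(I)$ by $zx_i<zx_j$ iff $i<j$ and $G(J)$ by $x_iy_{i,\ell}<x_jy_{j,p}$ iff $i<j$, or $i=j$ and $\ell<p$. For an ordered generating set and a subset $U$, $m_U=\mathrm{lcm}(U)$. $\mathbb{F}$ (basis $f_V$, $V\subseteq G(I)$) and $\mathbb{G}$ (basis $g_W$, $W\subseteq G(J)$) are the Taylor resolutions of $Q/I$, $Q/J$, with differential $\partial(e_U)=\sum_{u\in U}(-1)^{|\{v\in U:v<u\}|}\frac{m_U}{m_{U\setminus\{u\}}}e_{U\setminus\{u\}}$ and Gemeda product $e_Ve_W=(-1)^{|\{(v,w)\in V\times W:v>w\}|}\frac{m_Vm_W}{m_{V\cup W}}e_{V\cup W}$ if $V\cap W=\emptyset$, and $0$ otherwise. For $W\subseteq G(J)$, $W_z$ is the multiset $\{zx_i:x_iy_{i,j}\in W\}$ ordered as $W$, and $y_W=\mathrm{lcm}\{y_{i,j}:x_iy_{i,j}\in W\}$.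 $\Phi$ is the $Q$-linear map with $\Phi(1)=z$ and $\Phi(g_W)=y_Wf_{W_z}$ for $W\neq\emptyset$, where $f_{W_z}:=0$ if $W_z$ has a repeated element. *)

(* Defs.v *)
From HB Require Import structures.
From mathcomp Require Import all_boot all_order all_algebra.
From mathcomp Require Import mpoly.
Set Implicit Arguments. Unset Strict Implicit. Unset Printing Implicit Defensive.
Import GRing.Theory.
Local Open Scope ring_scope.

Section Taylor.
(* Generic Taylor resolution over Q = k[X_0..X_{N-1}] for an ordered, finite
   family of monomial generators indexed by a finType T.  An element of the resolution is a Q-linear
   combination of the basis elements e_U, U a subset of the generators, i.e. a
   finite function {set T} -> Q. *)
Variables (k : fieldType) (N : nat) (T : finType) (lt : rel T)
          (mon : T -> 'X_{1..N}).

Definition Poly := {mpoly k[N]}.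
Definition Elt := {ffun {set T} -> Poly}.

(* exponent vector of m_U = lcm(U); m_emptyset = 1 *)
Definition lcm_exp (U : {set T}) : 'X_{1..N} :=
  [multinom (\max_(u in U) mon u i)%N | i < N].

Definition gem_coef (V W : {set T}) : Poly :=
  'X_[mnm_sub (mnm_add (lcm_exp V) (lcm_exp W)) (lcm_exp (V :|: W))].

Definition gem_sign (V W : {set T}) : Poly :=
  (-1) ^+ #|[set p in setX V W | lt p.2 p.1]|.

Definition gem_mul (c d : Elt) : Elt :=
  [ffun U => \sum_(V : {set T}) \sum_(W : {set T} |
        [disjoint V & W] && (V :|: W == U))
        gem_sign V W * gem_coef V W * (c V * d W)].

Definition gem_one : Elt := [ffun U => (U == set0)%:R].

Definition scale_elt (q : Poly) (c : Elt) : Elt := [ffun U => q * c U].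

End Taylor.

Section Setting.
Variables (k : fieldType) (n : nat) (a : 'I_n -> nat).

(* Generators of J: x_i y_{i,j}, indexed by pairs (i, j) with j < a_i. *)
Definition GJ := {i : 'I_n & 'I_(a i)}.

(* Variables of Q: z, x_1..x_n, y_{i,j}. *)
Definition Var := (unit + ('I_n + GJ))%type.
Definition NV := #|{: Var}|.
Definition var (v : Var) : 'I_NV := enum_rank v.

Definition vz : 'I_NV := var (inl tt).
Definition vx (i : 'I_n) : 'I_NV := var (inr (inl i)).
Definition vy (w : GJ) : 'I_NV := var (inr (inr w)).

Definition monI (i : 'I_n) : 'X_{1..NV} := mnm_add (mnm1 vz) (mnm1 (vx i)).
Definition ltI : rel 'I_n := fun i j => (i < j)%N.

Definition monJ (w : GJ) : 'X_{1..NV} := mnm_add (mnm1 (vx (tag w))) (mnm1 (vy w)).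
Definition ltJ : rel GJ := fun w1 w2 =>
  ((tag w1 < tag w2)%N || ((tag w1 == tag w2) && (nat_of_ord (tagged w1) < nat_of_ord (tagged w2))%N)).

Definition EltF := Elt k NV 'I_n.
Definition EltG := Elt k NV GJ.

Definition mulF : EltF -> EltF -> EltF := @gem_mul k NV _ ltI monI.
Definition mulG : EltG -> EltG -> EltG := @gem_mul k NV _ ltJ monJ.
Definition oneF : EltF := gem_one k NV 'I_n.
Definition oneG : EltG := gem_one k NV GJ.

Definition zQ : Poly k NV := 'X_vz.

(* W_z has no repeated element iff the first components of W are distinct *)
Definition Wz_simple (W : {set GJ}) : bool :=
  [forall w1 in W, forall w2 in W, (tag w1 == tag w2) ==> (w1 == w2)].

Definition Wz (W : {set GJ}) : {set 'I_n} := [set tag w | w in W].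

(* y_W = lcm{y_{i,j}} = product of the distinct variables y_{i,j}, (i,j) in W *)
Definition yW (W : {set GJ}) : Poly k NV := \prod_(w in W) 'X_(vy w).

(* Phi(g_emptyset) = z f_emptyset; Phi(g_W) = y_W f_{W_z} (0 if W_z has repeats) *)
Definition Phi_basis (W : {set GJ}) : Poly k NV :=
  if W == set0 then zQ else yW W.

Definition Phi (c : EltG) : EltF :=
  [ffun V => \sum_(W : {set GJ} | Wz_simple W && (Wz W == V)) Phi_basis W * c W].

End Setting.

(* Main.v *)
Require Import Defs.
Set Warnings "-notation-overridden,-ambiguous-paths,-notation-incompatible-prefix".
From mathcomp Require Import all_boot all_order all_algebra.
From mathcomp Require Import mpoly ring.
Set Implicit Arguments. Unset Strict Implicit. Unset Printing Implicit Defensive.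
Import GRing.Theory.
Local Open Scope ring_scope.
Lemma max_union (T : finType) (f : T -> nat) (A B : {set T}) :
  [disjoint A & B] ->
  (forall u u', u \in A :|: B -> u' \in A :|: B -> f u != 0%N -> f u' != 0%N -> u = u') ->
  (\max_(u in A) f u + \max_(u in B) f u = \max_(u in A :|: B) f u)%N.
Proof.
move=> dAB uniq.
rewrite big_setU //=; last exact: maxnn.
case: (boolP [forall x in A, f x == 0%N]) => [/forall_inP HA|].
  by rewrite big1 ?add0n ?max0n // => x /HA /eqP.
case: (boolP [forall x in B, f x == 0%N]) => [/forall_inP HB|].
  by rewrite [\max_(u in B) _]big1 ?addn0 ?maxn0 // => x /HB /eqP.
move=> /forall_inPn [b Bb fb] /forall_inPn [x Ax fx].
have := uniq x b; rewrite !inE Ax Bb orbT => /(_ isT isT fx fb) exb.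
by move: dAB; rewrite disjoint_subset => /subsetP /(_ x Ax); rewrite inE exb Bb.
Qed.

Section Gen.
Variables (k : fieldType) (N : nat) (T : finType) (lt : rel T) (mon : T -> 'X_{1..N}).

Lemma lcm_expE (U : {set T}) i : lcm_exp mon U i = (\max_(u in U) mon u i)%N.
Proof. by rewrite /lcm_exp mnmE. Qed.

Lemma gem_coef_uniq (V W : {set T}) : [disjoint V & W] ->
  (forall i u u', u \in V :|: W -> u' \in V :|: W -> mon u i != 0%N -> mon u' i != 0%N -> u = u') ->
  gem_coef k mon V W = 1.
Proof.
move=> dVW H; rewrite /gem_coef -mpolyX0; congr mpolyX.
apply/mnmP => i; rewrite mnmBE mnmDE !lcm_expE mnm0E.
by rewrite (max_union (f := fun u => mon u i)) ?subnn // => u u'; apply: H.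
Qed.

Lemma gem_coef0l (W : {set T}) : gem_coef k mon set0 W = 1.
Proof.
rewrite /gem_coef -mpolyX0; congr mpolyX.
apply/mnmP => i; rewrite mnmBE mnmDE !lcm_expE mnm0E set0U big_set0.
by rewrite add0n subnn.
Qed.

Lemma gem_coef0r (V : {set T}) : gem_coef k mon V set0 = 1.
Proof.
rewrite /gem_coef -mpolyX0; congr mpolyX.
apply/mnmP => i; rewrite mnmBE mnmDE !lcm_expE mnm0E setU0 big_set0.
by rewrite addn0 subnn.
Qed.

Lemma gem_sign0l (W : {set T}) : @gem_sign k N T lt set0 W = 1.
Proof.
rewrite /gem_sign (_ : [set _ in _ | _] = set0) ?cards0 //.
by apply/setP => p; rewrite !inE.
Qed.

Lemma gem_sign0r (W : {set T}) : @gem_sign k N T lt W set0 = 1.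
Proof.
rewrite /gem_sign (_ : [set _ in _ | _] = set0) ?cards0 //.
by apply/setP => p; rewrite !inE andbF.
Qed.
End Gen.

Section Spec.
Variables (k : fieldType) (n : nat) (a : 'I_n -> nat).

Lemma var_inj : injective (@var n a).
Proof. exact: enum_rank_inj. Qed.

Lemma monJE (u : GJ a) v : monJ u v = ((vx a (tag u) == v) + (vy u == v))%N.
Proof. by rewrite /monJ mnmDE !mnm1E. Qed.

Lemma monIE (i : 'I_n) v : monI a i v = ((vz a == v) + (vx a i == v))%N.
Proof. by rewrite /monI mnmDE !mnm1E. Qed.

Lemma simpleP (S : {set GJ a}) u u' : Wz_simple S -> u \in S -> u' \in S ->
  tag u = tag u' -> u = u'.
Proof.
by move=> /forall_inP /(_ u) H uS u'S tu; move: (H uS) => /forall_inP /(_ u' u'S) /implyP /(_ (introT eqP tu)) /eqP.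
Qed.

Lemma monJ_nz (u : GJ a) v : monJ u v != 0%N -> v = vx a (tag u) \/ v = vy u.
Proof.
rewrite monJE; case: (eqVneq (vx a (tag u)) v) => [->|_]; first by left.
by case: (eqVneq (vy u) v) => [->|_]; [right|].
Qed.

Lemma monJ_uniq (S : {set GJ a}) v u u' : Wz_simple S -> u \in S -> u' \in S ->
  monJ u v != 0%N -> monJ u' v != 0%N -> u = u'.
Proof.
move=> sS uS u'S /monJ_nz [] -> /monJ_nz [] /var_inj; try discriminate.
- by move=> [] h; exact: (simpleP sS uS u'S h).
- by move=> [] ->.
Qed.

Lemma monI_nz (i : 'I_n) v : monI a i v != 0%N -> v = vz a \/ v = vx a i.
Proof.
rewrite monIE; case: (eqVneq (vz a) v) => [->|_]; first by left.
by case: (eqVneq (vx a i) v) => [->|_]; [right|].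
Qed.

Lemma simpleI (S : {set GJ a}) :
  (forall u u', u \in S -> u' \in S -> tag u = tag u' -> u = u') -> Wz_simple S.
Proof.
move=> H; apply/forall_inP => u uS; apply/forall_inP => u' u'S; apply/implyP => /eqP e.
by apply/eqP; apply: H.
Qed.

Lemma disjN (T : finType) (A B : {set T}) x : [disjoint A & B] -> x \in A -> x \in B -> False.
Proof. by rewrite -setI_eq0 => /eqP/setP/(_ x) + xA xB; rewrite !inE xA xB. Qed.

Lemma disjI (T : finType) (A B : {set T}) : (forall x, x \in A -> x \in B -> False) -> [disjoint A & B].
Proof.
move=> H; rewrite -setI_eq0; apply/eqP/setP => x; rewrite !inE.
by case xA: (x \in A); case xB: (x \in B) => //; case: (H x).
Qed.

Lemma cond_eq (A B : {set GJ a}) :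
  ([disjoint A & B] && Wz_simple (A :|: B)) =
  [&& Wz_simple A, Wz_simple B & [disjoint Wz A & Wz B]].
Proof.
apply/idP/idP.
  case/andP => dAB sU.
  apply/and3P; split.
  - by apply: simpleI => u u' uA u'A; apply: (simpleP sU); rewrite inE ?uA ?u'A.
  - by apply: simpleI => u u' uA u'A; apply: (simpleP sU); rewrite inE ?uA ?u'A ?orbT.
  apply: disjI => i /imsetP [x xA ->] /imsetP [y yB e].
  have exy : x = y by apply: (simpleP sU); rewrite // inE ?xA ?yB ?orbT.
  by subst y; apply: (disjN dAB xA yB).
case/and3P => sA sB dW; apply/andP; split.
  by apply: disjI => x xA xB; apply: (disjN dW (x := tag x)); apply: imset_f.
apply: simpleI => u u'; rewrite !inE => /orP [uA|uB] /orP [u'A|u'B] e.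
- exact: (simpleP sA).
- by exfalso; apply: (disjN dW (x := tag u)); [exact: imset_f | rewrite e; exact: imset_f].
- by exfalso; apply: (disjN dW (x := tag u')); [exact: imset_f | rewrite -e; exact: imset_f].
- exact: (simpleP sB).
Qed.

Lemma WzU (A B : {set GJ a}) : Wz (A :|: B) = Wz A :|: Wz B.
Proof. exact: imsetU. Qed.

Lemma sign_eq (A B : {set GJ a}) : [disjoint A & B] -> Wz_simple (A :|: B) ->
  #|[set p in setX A B | ltJ p.2 p.1]| = #|[set p in setX (Wz A) (Wz B) | ltI p.2 p.1]|.
Proof.
move=> dAB sU.
rewrite -(card_in_imset (f := fun p : GJ a * GJ a => (tag p.1, tag p.2))).
  apply/eq_card => -[i j]; rewrite ?[in RHS]inE /=.
  apply/imsetP/andP => [[[x y]]|[/andP [/imsetP [x xA ->] /imsetP [y yB ->]] lji]].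
    rewrite !inE /= => /andP [/andP [xA yB] lyx] [-> ->].
    split; first by rewrite !imset_f.
    move: lyx; rewrite /ltJ /ltI; case/orP => // /andP [/eqP e _].
    have exy : y = x by apply: (simpleP sU); rewrite // inE ?xA ?yB ?orbT.
    by subst y; case: (disjN dAB xA yB).
  exists (x, y) => //; rewrite !inE /= xA yB /=.
  by rewrite /ltJ; rewrite /ltI in lji; rewrite lji.
move=> [x y] [x' y']; rewrite !inE /= => /andP [/andP [xA yB] _] /andP [/andP [x'A y'B] _] [e1 e2].
have -> : x = x' by apply: (simpleP sU); rewrite // inE ?xA ?x'A.
have -> : y = y' by apply: (simpleP sU); rewrite // inE ?yB ?y'B ?orbT.
by [].
Qed.

Lemma max_one (T : finType) (f : T -> nat) (V : {set T}) : V != set0 ->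
  (forall i, i \in V -> f i = 1%N) -> (\max_(i in V) f i = 1)%N.
Proof.
move=> /set0Pn [x xV] H; apply/eqP; rewrite eqn_leq; apply/andP; split.
  by apply/bigmax_leqP => i iV; rewrite H.
by rewrite -(H x xV); apply: leq_bigmax_cond.
Qed.

Lemma coefF (V1 V2 : {set 'I_n}) : [disjoint V1 & V2] -> V1 != set0 -> V2 != set0 ->
  gem_coef k (monI a) V1 V2 = zQ k a.
Proof.
move=> d n1 n2; rewrite /gem_coef /zQ; congr mpolyX.
apply/mnmP => v; rewrite mnmBE mnmDE !lcm_expE mnm1E.
have vxz i : (vx a i == vz a) = false by apply/eqP => /var_inj.
case: (eqVneq (vz a) v) => [<-|nzv].
  rewrite !max_one // ?setU_eq0 ?negb_and ?n1 // => i _; by rewrite monIE eqxx vxz.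
rewrite (max_union (f := fun i => monI a i v)) ?subnn // => u u' _ _.
move=> /monI_nz [e|e]; first by rewrite e eqxx in nzv.
move=> /monI_nz [e'|e']; first by rewrite e' eqxx in nzv.
by move: e; rewrite e' => /var_inj [] ->.
Qed.

Lemma yWU (A B : {set GJ a}) : [disjoint A & B] -> yW k (A :|: B) = yW k A * yW k B.
Proof.
move=> d; rewrite /yW -bigU //; apply: eq_bigl => x; by rewrite !inE.
Qed.

End Spec.

Section M.
Variables (k : fieldType) (n : nat) (a : 'I_n -> nat).
Lemma lhs_exp (g1 g2 : EltG k a) V :
  scale_elt (zQ k a) (Phi (mulG g1 g2)) V =
  \sum_(A : {set GJ a}) \sum_(B : {set GJ a})
    (if [disjoint A & B] && Wz_simple (A :|: B) && (Wz (A :|: B) == V) then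
      zQ k a * (Phi_basis k (A :|: B) * (gem_sign k (NV a) (@ltJ n a) A B * gem_coef k (@monJ n a) A B * (g1 A * g2 B)))
     else 0).
Proof.
rewrite /scale_elt /Phi /mulG /gem_mul !ffunE mulr_sumr big_mkcond.
under eq_bigr => W _ do rewrite ffunE !mulr_sumr.
transitivity (\sum_(W : {set GJ a}) \sum_(A : {set GJ a}) \sum_(B : {set GJ a})
  (if (Wz_simple W && (Wz W == V)) && ([disjoint A & B] && (A :|: B == W)) then
      zQ k a * (Phi_basis k W * (gem_sign k (NV a) (@ltJ n a) A B * gem_coef k (@monJ n a) A B * (g1 A * g2 B)))
     else 0)).
  apply: eq_bigr => W _; case: ifP => P.
    apply: eq_bigr => A _; rewrite !mulr_sumr big_mkcond; apply: eq_bigr => B _; by case: ifP.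
  by rewrite big1 // => A _; rewrite big1 // => B _.
rewrite exchange_big; apply: eq_bigr => A _; rewrite exchange_big; apply: eq_bigr => B _.
rewrite (bigD1 (A :|: B)) //= big1 => [|W nW]; last first.
  by case: ifP => // /andP [_ /andP [_ /eqP e]]; rewrite e eqxx in nW.
rewrite addr0 eqxx andbT [X in if X then _ else _]andbC [X in if X then _ else _]andbA.
by [].
Qed.
Lemma rhs_exp (g1 g2 : EltG k a) V :
  mulF (Phi g1) (Phi g2) V =
  \sum_(A : {set GJ a}) \sum_(B : {set GJ a})
    (if [&& Wz_simple A, Wz_simple B, [disjoint Wz A & Wz B] & (Wz A :|: Wz B == V)] then
      gem_sign k (NV a) (@ltI n) (Wz A) (Wz B) * gem_coef k (@monI n a) (Wz A) (Wz B) *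
        (Phi_basis k A * g1 A * (Phi_basis k B * g2 B))
     else 0).
Proof.
rewrite /mulF /gem_mul ffunE.
transitivity (\sum_(V1 : {set 'I_n}) \sum_(V2 : {set 'I_n}) \sum_(A : {set GJ a}) \sum_(B : {set GJ a})
  (if ([disjoint V1 & V2] && (V1 :|: V2 == V)) && ((Wz_simple A && (Wz A == V1)) && (Wz_simple B && (Wz B == V2))) then
      gem_sign k (NV a) (@ltI n) V1 V2 * gem_coef k (@monI n a) V1 V2 *
        (Phi_basis k A * g1 A * (Phi_basis k B * g2 B))
     else 0)).
  apply: eq_bigr => V1 _; rewrite big_mkcond; apply: eq_bigr => V2 _.
  case: ifP => P; last by rewrite big1 // => A _; rewrite big1 // => B _; rewrite P.
  rewrite /Phi !ffunE big_distrlr mulr_sumr big_mkcond; apply: eq_bigr => A _.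
  case: ifP => PA; last by rewrite big1 // => B _; rewrite PA andbF.
  rewrite mulr_sumr big_mkcond; apply: eq_bigr => B _.
  by case: ifP => PB; rewrite ?PB ?PA ?P.
under eq_bigr => V1 _ do rewrite exchange_big.
rewrite exchange_big; apply: eq_bigr => A _.
under eq_bigr => V1 _ do rewrite exchange_big.
rewrite exchange_big; apply: eq_bigr => B _.
rewrite (bigD1 (Wz A)) //= [X in _ + X]big1 => [|V1 nV1]; last first.
  by rewrite big1 // => V2 _; case: ifP => // /and4P [_ /andP [_ /eqP e] _ _]; rewrite e eqxx in nV1.
rewrite addr0 (bigD1 (Wz B)) //= [X in _ + X]big1 => [|V2 nV2]; last first.
  by case: ifP => // /and4P [_ _ _ /eqP e]; rewrite e eqxx in nV2.
rewrite addr0 !eqxx !andbT.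
by case: (Wz_simple A); case: (Wz_simple B); case: [disjoint _ & _]; case: (_ == V).
Qed.
Lemma term_eq (A B : {set GJ a}) (x y : Defs.Poly k (NV a)) :
  [disjoint A & B] -> Wz_simple (A :|: B) ->
  zQ k a * (Phi_basis k (A :|: B) * (gem_sign k (NV a) (@ltJ n a) A B * gem_coef k (@monJ n a) A B * (x * y))) =
  gem_sign k (NV a) (@ltI n) (Wz A) (Wz B) * gem_coef k (@monI n a) (Wz A) (Wz B) *
        (Phi_basis k A * x * (Phi_basis k B * y)).
Proof.
move=> d sU.
have -> : gem_coef k (@monJ n a) A B = 1.
  apply: gem_coef_uniq => // v u u' uU u'U; exact: monJ_uniq sU uU u'U.
have -> : gem_sign k (NV a) (@ltJ n a) A B = gem_sign k (NV a) (@ltI n) (Wz A) (Wz B).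
  by rewrite /gem_sign sign_eq.
set s := gem_sign _ _ _ _ _.
have dW : [disjoint Wz A & Wz B] by move: (cond_eq A B); rewrite d sU => /esym /and3P [].
rewrite /Phi_basis.
case: (eqVneq A set0) => [->|nA].
  rewrite set0U /Wz imset0 gem_coef0l.
  case: (B == set0); ring.
case: (eqVneq B set0) => [->|nB].
  rewrite setU0 /Wz imset0 gem_coef0r.
  rewrite (negbTE nA); ring.
rewrite setU_eq0 (negbTE nA) /= yWU // coefF //; first ring.
all: by rewrite /Wz imset_eq0.
Qed.
Lemma zQ_neq1 : zQ k a != 1.
Proof.
apply/eqP => /(congr1 (fun p => p@_0%MM)); rewrite /zQ mcoeffX mcoeff1 eqxx.
have -> : (mnm1 (vz a) == 0%MM) = false.
  by apply/eqP => /mnmP /(_ (vz a)); rewrite mnm1E mnm0E eqxx.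
by move/eqP; rewrite eq_sym oner_eq0.
Qed.

Lemma Phi_one : Phi (oneG k a) set0 = zQ k a.
Proof.
rewrite /Phi ffunE (bigD1 set0) /=; last first.
  by rewrite /Wz imset0 eqxx andbT; apply: simpleI => u u'; rewrite inE.
rewrite big1 ?addr0; last first.
  move=> W /andP [/andP [_ /eqP e] nW]; by rewrite /Wz in e; move/eqP: e; rewrite imset_eq0 (negbTE nW).
by rewrite /oneG /gem_one ffunE eqxx /Phi_basis eqxx mulr1.
Qed.
End M.

Theorem mainTheorem10 (k : fieldType) (n : nat) (a : 'I_n -> nat) :
  (1 <= n)%N ->
  (forall g1 g2 : EltG k a,
      scale_elt (zQ k a) (Phi (mulG g1 g2)) = mulF (Phi g1) (Phi g2)) /\
  ~ (Phi (oneG k a) = oneF k a /\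
     forall g1 g2 : EltG k a, Phi (mulG g1 g2) = mulF (Phi g1) (Phi g2)).
Proof.
move=> _; split.
  move=> g1 g2; apply/ffunP => V; rewrite lhs_exp rhs_exp.
  apply: eq_bigr => A _; apply: eq_bigr => B _.
  case E: ([disjoint A & B] && Wz_simple (A :|: B)).
    move: (E); rewrite cond_eq => /and3P [sA sB dW]; case/andP: E => d sU.
    rewrite /= WzU sA sB dW /=; case: (_ == V) => //.
    exact: term_eq.
  move: E; rewrite cond_eq; by case: (Wz_simple A); case: (Wz_simple B); case: [disjoint Wz A & Wz B].
case=> H _; move: (Phi_one k a); rewrite H /oneF /gem_one ffunE eqxx => e.
by move: (zQ_neq1 k a); rewrite -e eqxx.
Qed.
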